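(* Let $1\le m\le J$. Then (i) $|\hat\varphi_{[m],l}[n]|=|\hat\psi_{[m],l}[n]|$ for all $n$ and all $0\le l\le 2^m-1$; (ii) $\varphi_{[m],l}=H(\psi_{[m],l})$ whenever $1\le l\le 2^m-2$; (iii) for all $l,\lambda\in\{0,\dots,2^m-1\}$ and $p,s\in\{0,\dots,N/2^m-1\}$, $$\langle \varphi_{[m],l}[\cdot-2^m p],\,\varphi_{[m],\lambda}[\cdot-2^m s]\rangle=\delta_{l,\lambda}\,\delta_{p,s},$$ so $\{\varphi_{[m],l}[\cdot-2^m p]\}$ is an orthonormal basis of $\Pi[N]$.
   Context: Let $N=2^{J}$ with $J\ge 1$ an integer and $\omega=e^{2\pi i/N}$. $\Pi[N]$ denotes the real vector space of real-valued $N$-periodic sequences $x=\{x[k]\}_{k\in\mathbb Z}$, with inner product $\langle x,y\rangle=\sum_{k=0}^{N-1}x[k]y[k]$ and norm $\|x\|=\langle x,x\rangle^{1/2}$. The DFT of an $N$-periodic sequence is $\hat x[n]=\sum_{k=0}^{N-1}x[k]\omega^{-kn}$, with inverse $x[k]=\frac1N\sum_{n=0}^{N-1}\hat x[n]\omega^{kn}$. For $x\in\Pi[N]$, its discrete periodic Hilbert transform $H(x)\in\Pi[N]$ has DFT $\widehat{H(x)}[n]=-i\hat x[n]$ for $0<n<N/2$, $=i\hat x[n]$ for $N/2<n<N$, and $=0$ for $n\in\{0,N/2\}$ (indices mod $N$). Discrete-spline wavelet packets: fix an integer $r\ge1$; let $U[n]=\tfrac12\big(\cos^{4r}\tfrac{\pi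 n}{N}+\sin^{4r}\tfrac{\pi n}{N}\big)$, $\beta[n]=\cos^{2r}\tfrac{\pi n}{N}/\sqrt{U[n]}$, $\alpha[n]=\omega^{n}\sin^{2r}\tfrac{\pi n}{N}/\sqrt{U[n]}$, and $\gamma_0=\beta$, $\gamma_1=\alpha$. The wavelet packets $\psi_{[m],l}\in\Pi[N]$, $1\le m\le J$, $0\le l\le 2^m-1$, are defined by their DFTs: $\hat\psi_{[1],0}=\beta$, $\hat\psi_{[1],1}=\alpha$, and for $1\le m<J$, $\lambda\in\{0,\dots,2^m-1\}$, $\mu\in\{0,1\}$: $\hat\psi_{[m+1],\rho}[n]=\gamma_\mu[2^m n]\,\hat\psi_{[m],\lambda}[n]$, where $\rho=2\lambda+\mu$ if $\lambda$ is even and $\rho=2\lambda+1-\mu$ if $\lambda$ is odd. Known facts (may be assumed): for each $m$, $\{\psi_{[m],l}[\cdot-2^m p]:0\le l\le 2^m-1,\,0\le p<N/2^m\}$ is an orthonormal basis of $\Pi[N]$; $\hat\psi_{[m],l}[0]=0$ for $l\ne0$, and $\hat\psi_{[m],l}[N/2]=0$ for $l\neq 2^m-1$. Complementary wavelet packets: $\varphi_{[m],l}\in\Pi[N]$ is defined by its DFT $\hat\varphi_{[m],l}[n]=-i\hat\psi_{[m],l}[n]$ for $0<n<N/2$, $=i\hat\psi_{[m],l}[n]$ for $N/2<n<N$, and $=\hat\psi_{[m],l}[n]$ for $n\in\{0,N/2\}$. *)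

(* Defs.v *)
From Stdlib Require Import Reals Lra Lia ZArith Arith Bool.
Open Scope R_scope.

Definition C : Type := (R * R)%type.
Definition Cre (z : C) : R := fst z.
Definition Cim (z : C) : R := snd z.
Definition RtoC (a : R) : C := (a, 0).
Definition C0 : C := (0, 0).
Definition C1 : C := (1, 0).
Definition Ci : C := (0, 1).
Definition Cadd (z w : C) : C := (fst z + fst w, snd z + snd w).
Definition Copp (z : C) : C := (- fst z, - snd z).
Definition Cmul (z w : C) : C :=
  (fst z * fst w - snd z * snd w, fst z * snd w + snd z * fst w).
Definition Cscale (a : R) (z : C) : C := (a * fst z, a * snd z).
Definition Cmod (z : C) : R := sqrt (fst z ^ 2 + snd z ^ 2).
Definition Cexp_i (t : R) : C := (cos t, sin t).

Fixpoint rsum (n : nat) (f : nat -> R) : R :=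
  match n with O => 0 | S n' => rsum n' f + f n' end.
Fixpoint csum (n : nat) (f : nat -> C) : C :=
  match n with O => C0 | S n' => Cadd (csum n' f) (f n') end.

Definition Nn (J : nat) : nat := (2 ^ J)%nat.
Definition NR (J : nat) : R := INR (Nn J).

(** omega^(k) = e^{2 pi i k / N}, for an integer exponent given as a real *)
Definition omega_pow (J : nat) (e : R) : C := Cexp_i (2 * PI * e / NR J).

(** N-periodic real sequences: elements of Pi[N] *)
Definition periodic (J : nat) (x : Z -> R) : Prop :=
  forall k : Z, x (k + Z.of_nat (Nn J))%Z = x k.

Definition DFT (J : nat) (x : Z -> R) (n : nat) : C :=
  csum (Nn J) (fun k => Cscale (x (Z.of_nat k)) (omega_pow J (- (INR k * INR n)))).

Definition inner (J : nat) (x y : Z -> R) : R :=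
  rsum (Nn J) (fun k => x (Z.of_nat k) * y (Z.of_nat k)).
Definition tshift (x : Z -> R) (a : Z) : Z -> R := fun k => x (k - a)%Z.

(** H(x) is the (real) sequence whose DFT is hmult n * xhat[n], given by the
    inverse DFT (its imaginary part vanishes for real x; we take the real part). *)
Definition hmult (J : nat) (n : nat) : C :=
  let n' := (n mod Nn J)%nat in
  let h := (Nn J / 2)%nat in
  if (0 <? n')%nat && (n' <? h)%nat then Copp Ci
  else if (h <? n')%nat then Ci
  else C0.

Definition Hilbert (J : nat) (x : Z -> R) : Z -> R := fun k =>
  / NR J * Cre (csum (Nn J) (fun n =>
     Cmul (Cmul (hmult J n) (DFT J x n)) (omega_pow J (IZR k * INR n)))).

Definition Uf (J r : nat) (n : nat) : R :=
  / 2 * (cos (PI * INR n / NR J) ^ (4 * r) + sin (PI * INR n / NR J) ^ (4 * r)).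
Definition betaf (J r : nat) (n : nat) : C :=
  RtoC (cos (PI * INR n / NR J) ^ (2 * r) / sqrt (Uf J r n)).
Definition alphaf (J r : nat) (n : nat) : C :=
  Cscale (sin (PI * INR n / NR J) ^ (2 * r) / sqrt (Uf J r n)) (omega_pow J (INR n)).
Definition gammaf (J r : nat) (mu : nat) (n : nat) : C :=
  if (mu =? 0)%nat then betaf J r n else alphaf J r n.

(** mu determined by rho: rho = 2 lambda + mu (lambda even),
    rho = 2 lambda + 1 - mu (lambda odd), lambda = rho / 2. *)
Definition mu_of (rho : nat) : nat :=
  if Nat.even (rho / 2) then (rho mod 2)%nat else (1 - rho mod 2)%nat.

(** psihat m l n.  Level 0 is an auxiliary constant 1, so that level 1 gives
    psihat 1 0 = beta and psihat 1 1 = alpha, and for m >= 1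
    psihat (m+1) rho n = gamma_mu [2^m n] * psihat m lambda n. *)
Fixpoint psihat (J r : nat) (m : nat) (rho : nat) (n : nat) : C :=
  match m with
  | O => C1
  | S m' => Cmul (gammaf J r (mu_of rho) (2 ^ m' * n)%nat) (psihat J r m' (rho / 2) n)
  end.

Definition phihat (J r : nat) (m l : nat) (n : nat) : C :=
  let n' := (n mod Nn J)%nat in
  let h := (Nn J / 2)%nat in
  if (0 <? n')%nat && (n' <? h)%nat then Cmul (Copp Ci) (psihat J r m l n)
  else if (h <? n')%nat then Cmul Ci (psihat J r m l n)
  else psihat J r m l n.

(* Main.v *)
From Pilot Require Import Defs.
From Stdlib Require Import Reals ZArith Arith Bool Lra Lia.
Open Scope R_scope.
Import Pilot.Defs.

Definition Cconj (z : C) : C := (fst z, - snd z).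

Ltac Cdes := repeat match goal with z : C |- _ => destruct z end.
Ltac Csimpl := unfold Cadd, Cmul, Copp, Cscale, RtoC, C0, C1, Ci, Cconj, Cre, Cim in *; simpl in *.
Ltac Csolve := Cdes; Csimpl; f_equal; ring.

Lemma Cadd0l z : Cadd C0 z = z. Proof. Csolve. Qed.
Lemma Cadd0r z : Cadd z C0 = z. Proof. Csolve. Qed.
Lemma csum_ext n f g : (forall i, (i < n)%nat -> f i = g i) -> csum n f = csum n g.
Proof. induction n; simpl; intros H; auto. rewrite IHn, H; auto. Qed.
Lemma rsum_ext n f g : (forall i, (i < n)%nat -> f i = g i) -> rsum n f = rsum n g.
Proof. induction n; simpl; intros H; auto. rewrite IHn, H; auto. Qed.
Lemma csum_add n f g : csum n (fun i => Cadd (f i) (g i)) = Cadd (csum n f) (csum n g).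
Proof. induction n; simpl. unfold C0, Cadd; simpl; f_equal; ring. rewrite IHn. Csolve. Qed.
Lemma csum_exchange n m (f : nat -> nat -> C) :
  csum n (fun i => csum m (fun j => f i j)) = csum m (fun j => csum n (fun i => f i j)).
Proof.
  induction n; simpl.
  - clear. induction m; simpl; auto. rewrite <- IHm. unfold C0, Cadd; simpl; f_equal; ring.
  - rewrite IHn, <- csum_add. auto.
Qed.
Lemma Cmul_csum_l c n f : Cmul c (csum n f) = csum n (fun i => Cmul c (f i)).
Proof. induction n; simpl. Csolve. rewrite <- IHn. Csolve. Qed.
Lemma Cmul_csum_r c n f : Cmul (csum n f) c = csum n (fun i => Cmul (f i) c).
Proof. induction n; simpl. Csolve. rewrite <- IHn. Csolve. Qed.
Lemma Cscale_csum a n f : Cscale a (csum n f) = csum n (fun i => Cscale a (f i)).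
Proof. induction n; simpl. Csolve. rewrite <- IHn. Csolve. Qed.
Lemma Cconj_csum n f : Cconj (csum n f) = csum n (fun i => Cconj (f i)).
Proof. induction n; simpl. Csolve. rewrite <- IHn. Csolve. Qed.
Lemma Cre_csum n f : Cre (csum n f) = rsum n (fun i => Cre (f i)).
Proof. induction n; simpl; auto. rewrite <- IHn. Csolve. Qed.
Lemma csum_RtoC n f : csum n (fun i => RtoC (f i)) = RtoC (rsum n f).
Proof. induction n; simpl; auto. rewrite IHn. Csolve. Qed.
Lemma csum_zero n f : (forall i, (i < n)%nat -> f i = C0) -> csum n f = C0.
Proof. induction n; simpl; intros H; auto. rewrite IHn, H; auto. Csolve. Qed.
Lemma rsum_zero n f : (forall i, (i < n)%nat -> f i = 0) -> rsum n f = 0.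
Proof. induction n; simpl; intros H; auto. rewrite IHn, H; auto. ring. Qed.
Lemma csum_single n f i0 : (i0 < n)%nat -> (forall i, (i < n)%nat -> i <> i0 -> f i = C0) ->
  csum n f = f i0.
Proof.
  induction n; intros Hi H; [lia|]. simpl.
  destruct (Nat.eq_dec i0 n).
  - subst. rewrite csum_zero, Cadd0l; auto. intros; apply H; lia.
  - rewrite IHn by (try lia; intros; apply H; lia). rewrite (H n), Cadd0r by lia; auto.
Qed.
Lemma rsum_single n f i0 : (i0 < n)%nat -> (forall i, (i < n)%nat -> i <> i0 -> f i = 0) ->
  rsum n f = f i0.
Proof.
  induction n; intros Hi H; [lia|]. simpl.
  destruct (Nat.eq_dec i0 n).
  - subst. rewrite rsum_zero. ring. intros; apply H; lia.
  - rewrite IHn by (try lia; intros; apply H; lia). rewrite (H n) by lia. ring.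
Qed.
Lemma rsum_plus n f g : rsum n (fun i => f i + g i) = rsum n f + rsum n g.
Proof. induction n; simpl. ring. rewrite IHn; ring. Qed.
Lemma rsum_mult_l c n f : c * rsum n f = rsum n (fun i => c * f i).
Proof. induction n; simpl. ring. rewrite <- IHn; ring. Qed.
Lemma rsum_mult_r c n f : rsum n f * c = rsum n (fun i => f i * c).
Proof. induction n; simpl. ring. rewrite <- IHn; ring. Qed.
Lemma rsum_exchange n m (f : nat -> nat -> R) :
  rsum n (fun i => rsum m (fun j => f i j)) = rsum m (fun j => rsum n (fun i => f i j)).
Proof.
  induction n; simpl.
  - symmetry; apply rsum_zero; auto.
  - rewrite IHn, <- rsum_plus. auto.
Qed.
Lemma rsum_app a b g : rsum (a + b) g = rsum a g + rsum b (fun p => g (a + p)%nat).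
Proof. induction b; simpl. rewrite Nat.add_0_r; ring. rewrite Nat.add_succ_r; simpl. rewrite IHb; ring. Qed.
Lemma rsum_split a b g : rsum (a * b) g = rsum a (fun l => rsum b (fun p => g (l * b + p)%nat)).
Proof.
  induction a; simpl; auto.
  replace (b + a * b)%nat with (a * b + b)%nat by lia.
  rewrite rsum_app, IHa. auto.
Qed.

Lemma Cmul_add_distr a b c : Cmul a (Cadd b c) = Cadd (Cmul a b) (Cmul a c).
Proof. Csolve. Qed.
Lemma csum_C1 n : csum n (fun _ => C1) = RtoC (INR n).
Proof. induction n; simpl csum. Csolve. rewrite IHn, S_INR. Csolve. Qed.

Lemma Nn_pos J : (0 < Nn J)%nat.
Proof. unfold Nn. induction J; simpl; lia. Qed.
Lemma NR_pos J : 0 < NR J.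
Proof. unfold NR. apply lt_0_INR, Nn_pos. Qed.
Lemma NR_IZR J : IZR (Z.of_nat (Nn J)) = NR J.
Proof. unfold NR. rewrite INR_IZR_INZ; auto. Qed.

Lemma IZR_pos_INR p : IZR (Zpos p) = INR (Pos.to_nat p).
Proof. rewrite INR_IZR_INZ, positive_nat_Z; auto. Qed.

Lemma cos_Zper x q : cos (x + 2 * IZR q * PI) = cos x.
Proof.
  destruct q as [|p|p].
  - f_equal; simpl; ring.
  - rewrite (IZR_pos_INR p), cos_period; auto.
  - replace x with ((x + 2 * IZR (Zneg p) * PI) + 2 * INR (Pos.to_nat p) * PI) at 2.
    + rewrite cos_period; auto.
    + rewrite <- (IZR_pos_INR p). replace (IZR (Zneg p)) with (- IZR (Zpos p)) by auto. ring.
Qed.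
Lemma sin_Zper x q : sin (x + 2 * IZR q * PI) = sin x.
Proof.
  destruct q as [|p|p].
  - f_equal; simpl; ring.
  - rewrite (IZR_pos_INR p), sin_period; auto.
  - replace x with ((x + 2 * IZR (Zneg p) * PI) + 2 * INR (Pos.to_nat p) * PI) at 2.
    + rewrite sin_period; auto.
    + rewrite <- (IZR_pos_INR p). replace (IZR (Zneg p)) with (- IZR (Zpos p)) by auto. ring.
Qed.

Section Omega.
Variable J : nat.
Notation W := (omega_pow J).

Lemma W_add a b : Cmul (W a) (W b) = W (a + b).
Proof.
  unfold omega_pow, Cexp_i, Cmul; simpl.
  replace (2 * PI * (a + b) / NR J) with (2 * PI * a / NR J + 2 * PI * b / NR J) by (unfold Rdiv; ring).
  rewrite cos_plus, sin_plus. f_equal; ring.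
Qed.
Lemma W_0 : W 0 = C1.
Proof.
  unfold omega_pow, Cexp_i. replace (2 * PI * 0 / NR J) with 0 by (unfold Rdiv; ring).
  rewrite cos_0, sin_0; auto.
Qed.
Lemma W_conj a : Cconj (W a) = W (- a).
Proof.
  unfold omega_pow, Cexp_i, Cconj; simpl.
  replace (2 * PI * - a / NR J) with (- (2 * PI * a / NR J)) by (unfold Rdiv; ring).
  rewrite cos_neg, sin_neg; auto.
Qed.
Lemma W_Zper a q : W (a + IZR q * NR J) = W a.
Proof.
  pose proof (NR_pos J).
  unfold omega_pow, Cexp_i.
  replace (2 * PI * (a + IZR q * NR J) / NR J) with (2 * PI * a / NR J + 2 * IZR q * PI) by (field; lra).
  rewrite cos_Zper, sin_Zper; auto.
Qed.
Lemma W_int q : W (IZR q * NR J) = C1.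
Proof. rewrite <- W_0. replace (IZR q * NR J) with (0 + IZR q * NR J) by ring. apply W_Zper. Qed.
Lemma W_eq a b : a = b -> W a = W b.
Proof. intros ->; auto. Qed.
Lemma W_mod1 a : Cmul (W a) (Cconj (W a)) = C1.
Proof. unfold omega_pow, Cexp_i, Cmul, Cconj, C1; simpl. f_equal. pose proof (sin2_cos2 (2 * PI * a / NR J)). unfold Rsqr in H. lra. ring. Qed.

Fixpoint Cpow (z : C) (n : nat) : C := match n with O => C1 | S n => Cmul (Cpow z n) z end.

Lemma W_nat a n : W (a * INR n) = Cpow (W a) n.
Proof.
  induction n; simpl Cpow.
  - rewrite Rmult_0_r; apply W_0.
  - rewrite S_INR, <- IHn, W_add. apply W_eq; ring.
Qed.

Lemma geom z n : Cmul (Cadd z (Copp C1)) (csum n (Cpow z)) = Cadd (Cpow z n) (Copp C1).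
Proof.
  induction n; simpl csum; simpl Cpow.
  - Csolve.
  - rewrite Cmul_add_distr, IHn. generalize (Cpow z n). intros. Csolve.
Qed.

Lemma Ccancel u s : Cmul u s = C0 -> u <> C0 -> s = C0.
Proof.
  destruct u as [a b], s as [s t]; unfold Cmul, C0; simpl; intros H Hu.
  injection H; intros H2 H1.
  assert (Hn : a * a + b * b <> 0).
  { intro E. apply Hu. assert (a = 0) by nra. assert (b = 0) by nra. subst; auto. }
  assert (E1 : s * (a * a + b * b) = a * (a * s - b * t) + b * (a * t + b * s)) by ring.
  assert (E2 : t * (a * a + b * b) = a * (a * t + b * s) - b * (a * s - b * t)) by ring.
  rewrite H1, H2 in E1, E2. rewrite Rmult_0_r, Rmult_0_r, Rplus_0_r in E1. rewrite Rmult_0_r, Rmult_0_r, Rminus_0_r in E2.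
  f_equal.
  - apply Rmult_integral in E1; destruct E1; [auto| lra].
  - apply Rmult_integral in E2; destruct E2; [auto| lra].
Qed.

Lemma lemmaA d :
  csum (Nn J) (fun n => W (IZR d * INR n)) =
  if Z.eqb (d mod Z.of_nat (Nn J)) 0 then RtoC (NR J) else C0.
Proof.
  pose proof (Nn_pos J) as HN. pose proof (NR_pos J) as HNR.
  set (ZN := Z.of_nat (Nn J)).
  assert (HZN : (0 < ZN)%Z) by (unfold ZN; lia).
  pose proof (Z.div_mod d ZN ltac:(lia)) as Hd.
  destruct (Z.eqb_spec (d mod ZN) 0) as [E|E].
  - rewrite (csum_ext _ _ (fun _ => C1)). apply csum_C1.
    intros i _. rewrite Hd, E, Z.add_0_r, mult_IZR.
    unfold ZN; rewrite NR_IZR.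
    replace (NR J * IZR (d / Z.of_nat (Nn J)) * INR i) with (IZR (d / Z.of_nat (Nn J) * Z.of_nat i) * NR J)
      by (rewrite mult_IZR, <- INR_IZR_INZ; ring).
    apply W_int.
  - rewrite (csum_ext _ _ (Cpow (W (IZR d)))) by (intros; apply W_nat).
    apply (Ccancel (Cadd (W (IZR d)) (Copp C1))).
    + rewrite geom, <- W_nat. unfold NR. rewrite INR_IZR_INZ, <- mult_IZR. fold ZN.
      replace (IZR (d * ZN)) with (IZR d * NR J) by (rewrite mult_IZR; unfold ZN; rewrite NR_IZR; auto).
      rewrite W_int. Csolve.
    + set (r := (d mod ZN)%Z) in *.
      pose proof (Z.mod_pos_bound d ZN HZN) as Hr. fold r in Hr.
      assert (Wd : W (IZR d) = W (IZR r)).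
      { rewrite Hd, plus_IZR, mult_IZR. unfold ZN; rewrite NR_IZR.
        rewrite <- (W_Zper (IZR r) (d / Z.of_nat (Nn J))). apply W_eq; ring. }
      rewrite Wd. unfold omega_pow, Cexp_i, Cadd, Copp, C1, C0; simpl. intro Heq.
      injection Heq; intros Hs Hc.
      assert (Hr1 : 0 < IZR r) by (apply IZR_lt; lia).
      assert (Hr2 : IZR r < NR J) by (rewrite <- NR_IZR; apply IZR_lt; unfold ZN in Hr; lia).
      set (t := 2 * IZR r / NR J).
      assert (Ht : t * NR J = 2 * IZR r) by (unfold t; field; lra).
      replace (2 * PI * IZR r / NR J) with (PI * t) in Hs, Hc by (unfold t; field; lra).
      pose proof PI_RGT_0.
      assert (0 < t) by nra. assert (t < 2) by nra.
      destruct (Rtotal_order t 1) as [T1|[T1|T1]].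
      * assert (0 < sin (PI * t)) by (apply sin_gt_0; nra). lra.
      * rewrite T1, Rmult_1_r, cos_PI in Hc. lra.
      * assert (sin (PI * t) < 0) by (apply sin_lt_0; nra). lra.
Qed.
End Omega.

Lemma Cmul_assoc a b c : Cmul a (Cmul b c) = Cmul (Cmul a b) c.
Proof. Csolve. Qed.
Lemma Cscale_mul a u v : Cmul (Cscale a u) v = Cscale a (Cmul u v).
Proof. Csolve. Qed.

Lemma modZ_zero_iff (N : Z) (k j : Z) : (0 < N)%Z -> (0 <= j < N)%Z ->
  ((k - j) mod N = 0)%Z <-> j = (k mod N)%Z.
Proof.
  intros HN Hj.
  rewrite <- Zminus_mod_idemp_l.
  pose proof (Z.mod_pos_bound k N HN).
  set (r := (k mod N)%Z) in *.
  destruct (Z_le_gt_dec j r).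
  - rewrite Z.mod_small by lia. lia.
  - rewrite <- (Z_mod_plus_full (r - j) 1 N). rewrite Z.mod_small by lia. lia.
Qed.

Section Per.
Variable J : nat.
Notation W := (omega_pow J).
Notation N := (Nn J).
Variable x : Z -> R.
Hypothesis Hx : periodic J x.

Lemma per_nat n a : x (a + Z.of_nat n * Z.of_nat N)%Z = x a.
Proof.
  induction n.
  - f_equal; lia.
  - rewrite <- IHn, <- (Hx (a + Z.of_nat n * Z.of_nat N)%Z). f_equal; lia.
Qed.
Lemma per_Z q a : x (a + q * Z.of_nat N)%Z = x a.
Proof.
  destruct (Z_le_gt_dec 0 q).
  - rewrite <- (Z2Nat.id q) by lia. apply per_nat.
  - rewrite <- (per_nat (Z.to_nat (- q)) (a + q * Z.of_nat N)). f_equal. rewrite Z2Nat.id by lia. lia.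
Qed.
Lemma per_mod k : x k = x (k mod Z.of_nat N)%Z.
Proof.
  pose proof (Nn_pos J).
  rewrite (Z.div_mod k (Z.of_nat N)) at 1 by lia.
  rewrite Z.add_comm, Z.mul_comm. apply per_Z.
Qed.

Lemma inversion k :
  csum N (fun n => Cmul (DFT J x n) (W (IZR k * INR n))) = RtoC (NR J * x k).
Proof.
  pose proof (Nn_pos J) as HN.
  unfold DFT.
  transitivity (csum N (fun n => csum N (fun j =>
     Cscale (x (Z.of_nat j)) (W (IZR (k - Z.of_nat j) * INR n))))).
  { apply csum_ext; intros n _. rewrite Cmul_csum_r. apply csum_ext; intros j _.
    rewrite Cscale_mul, W_add. f_equal. apply W_eq.
    rewrite minus_IZR, <- INR_IZR_INZ; ring. }
  rewrite csum_exchange.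
  rewrite (csum_ext _ _ (fun j => Cscale (x (Z.of_nat j))
     (if Z.eqb ((k - Z.of_nat j) mod Z.of_nat N) 0 then RtoC (NR J) else C0))).
  2:{ intros j _. rewrite <- Cscale_csum, lemmaA. auto. }
  pose proof (Z.mod_pos_bound k (Z.of_nat N) ltac:(lia)) as Hb.
  rewrite (csum_single _ _ (Z.to_nat (k mod Z.of_nat N))).
  - rewrite Z2Nat.id by lia.
    replace ((k - k mod Z.of_nat N) mod Z.of_nat N =? 0)%Z with true.
    + rewrite <- per_mod. unfold Cscale, RtoC; simpl. f_equal; ring.
    + symmetry. apply Z.eqb_eq, modZ_zero_iff; lia.
  - lia.
  - intros j Hj Hne.
    replace ((k - Z.of_nat j) mod Z.of_nat N =? 0)%Z with false.
    + unfold Cscale, C0; simpl; f_equal; ring.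
    + symmetry. apply Z.eqb_neq. rewrite modZ_zero_iff by lia. lia.
Qed.
End Per.

Lemma tshift_periodic J x a : periodic J x -> periodic J (tshift x a).
Proof. unfold periodic, tshift; intros H k. rewrite <- (H (k - a)%Z). f_equal; lia. Qed.

Section Shift.
Variable J : nat.
Notation W := (omega_pow J).
Notation N := (Nn J).

Lemma shift_DFT x a n : periodic J x -> (n < N)%nat ->
  DFT J (tshift x a) n = Cmul (W (- (IZR a * INR n))) (DFT J x n).
Proof.
  intros Hx Hn. pose proof (Nn_pos J) as HN. pose proof (NR_pos J) as HNR.
  set (X := DFT J x).
  set (P := fun m => Cmul (X m) (W (- (IZR a * INR m)))).
  transitivity (Cscale (/ NR J) (csum N (fun m => Cmul (P m)
      (csum N (fun k => W (IZR (Z.of_nat m - Z.of_nat n) * INR k)))))).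
  2:{ rewrite (csum_ext _ _ (fun m => Cmul (P m)
        (if Z.eqb ((Z.of_nat m - Z.of_nat n) mod Z.of_nat N) 0 then RtoC (NR J) else C0))).
      2:{ intros; rewrite lemmaA; auto. }
      rewrite (csum_single _ _ n Hn).
      - rewrite Z.sub_diag, Z.mod_0_l by lia. simpl. unfold P.
        generalize (X n) (W (- (IZR a * INR n))). intros. Cdes; Csimpl. f_equal; field; lra.
      - intros m Hm Hne. replace ((Z.of_nat m - Z.of_nat n) mod Z.of_nat N =? 0)%Z with false.
        + generalize (P m); intros; Csolve.
        + symmetry. apply Z.eqb_neq. rewrite modZ_zero_iff by lia. rewrite Z.mod_small by lia. lia. }
  transitivity (csum N (fun k => Cscale (/ NR J) (csum N (fun m =>
      Cmul (P m) (W (IZR (Z.of_nat m - Z.of_nat n) * INR k)))))).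
  2:{ rewrite <- Cscale_csum, csum_exchange. f_equal. apply csum_ext; intros m _.
      rewrite Cmul_csum_l; auto. }
  unfold DFT at 1. apply csum_ext; intros k Hk.
  unfold tshift.
  transitivity (Cmul (Cscale (/ NR J) (RtoC (NR J * x (Z.of_nat k - a)%Z))) (W (- (INR k * INR n)))).
  { unfold Cscale, RtoC, Cmul; simpl. f_equal; field; lra. }
  rewrite <- (inversion J x Hx). rewrite Cscale_mul, Cmul_csum_r. f_equal. apply csum_ext; intros m _.
  unfold P. rewrite <- !Cmul_assoc, !W_add. f_equal. apply W_eq.
  rewrite !minus_IZR, <- !INR_IZR_INZ; ring.
Qed.
End Shift.

Lemma parseval J x y : periodic J x -> periodic J y ->
  NR J * inner J x y = Cre (csum (Nn J) (fun n => Cmul (DFT J x n) (Cconj (DFT J y n)))).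
Proof.
  intros Hx Hy.
  transitivity (Cre (csum (Nn J) (fun n => csum (Nn J) (fun j =>
     Cscale (y (Z.of_nat j)) (Cmul (DFT J x n) (omega_pow J (IZR (Z.of_nat j) * INR n))))))).
  2:{ symmetry. f_equal. apply csum_ext; intros n _. unfold DFT at 2. rewrite Cconj_csum, Cmul_csum_l.
      apply csum_ext; intros j _.
      replace (omega_pow J (IZR (Z.of_nat j) * INR n)) with (Cconj (omega_pow J (- (INR j * INR n)))).
      + generalize (DFT J x n) (omega_pow J (- (INR j * INR n))). intros. Csolve.
      + rewrite W_conj. apply W_eq. rewrite <- INR_IZR_INZ; ring. }
  rewrite csum_exchange.
  rewrite (csum_ext _ _ (fun j => RtoC (NR J * x (Z.of_nat j) * y (Z.of_nat j)))).
  2:{ intros j _. rewrite <- Cscale_csum, inversion by auto. unfold Cscale, RtoC; simpl; f_equal; ring. }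
  rewrite csum_RtoC. unfold inner, Cre, RtoC; simpl. rewrite rsum_mult_l. apply rsum_ext; intros; ring.
Qed.

Lemma Nn_half J : (1 <= J)%nat -> Nn J = (2 * 2 ^ (J - 1))%nat /\ (Nn J / 2 = 2 ^ (J - 1))%nat.
Proof.
  intros HJ. unfold Nn.
  assert (E : (2 ^ J = 2 * 2 ^ (J - 1))%nat).
  { replace J with (S (J - 1)) at 1 by lia. apply Nat.pow_succ_r'. }
  rewrite E. split; auto. rewrite Nat.mul_comm, Nat.div_mul; lia.
Qed.

Lemma Cmul_C0_l z : Cmul C0 z = C0. Proof. Csolve. Qed.
Lemma Cmul_C0_r z : Cmul z C0 = C0. Proof. Csolve. Qed.

Lemma alphaf_zero J r n : (1 <= r)%nat -> sin (PI * INR n / NR J) = 0 -> alphaf J r n = C0.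
Proof.
  intros Hr Hs. unfold alphaf. rewrite Hs, pow_i by lia. unfold Rdiv. rewrite Rmult_0_l.
  generalize (omega_pow J (INR n)); intros; Csolve.
Qed.
Lemma betaf_zero J r n : (1 <= r)%nat -> cos (PI * INR n / NR J) = 0 -> betaf J r n = C0.
Proof.
  intros Hr Hs. unfold betaf. rewrite Hs, pow_i by lia. unfold Rdiv. rewrite Rmult_0_l. auto.
Qed.

Lemma psihat_S J r m rho n : psihat J r (S m) rho n =
  Cmul (gammaf J r (mu_of rho) (2 ^ m * n)%nat) (psihat J r m (rho / 2) n).
Proof. reflexivity. Qed.

Lemma psihat_zero0 J r m : (1 <= r)%nat -> forall rho, (rho < 2 ^ m)%nat -> rho <> 0%nat ->
  psihat J r m rho 0 = C0.
Proof.
  intros Hr. induction m; intros rho Hrho Hne.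
  - simpl in Hrho. lia.
  - rewrite psihat_S. pose proof (Nat.div_mod_eq rho 2) as Hd. pose proof (Nat.mod_upper_bound rho 2 ltac:(lia)).
    rewrite Nat.pow_succ_r' in Hrho.
    destruct (Nat.eq_dec (rho / 2) 0) as [E|E].
    + assert (Hm : mu_of rho = 1%nat).
      { unfold mu_of. rewrite E. change (Nat.even 0) with true. cbv iota. lia. }
      rewrite Hm. unfold gammaf. simpl Nat.eqb. cbv iota.
      rewrite Nat.mul_0_r, alphaf_zero; auto. apply Cmul_C0_l.
      simpl INR. replace (PI * 0 / NR J) with 0 by (unfold Rdiv; ring). apply sin_0.
    + rewrite IHm; auto. apply Cmul_C0_r.
      apply Nat.Private_NDivProp.div_lt_upper_bound; lia.
Qed.

Lemma psihat_zeroh J r m : (1 <= J)%nat -> (1 <= r)%nat -> (1 <= m)%nat -> (m <= J)%nat ->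
  forall rho, (rho < 2 ^ m)%nat -> rho <> (2 ^ m - 1)%nat ->
  psihat J r m rho (Nn J / 2) = C0.
Proof.
  intros HJ Hr. destruct (Nn_half J HJ) as [HN Hh].
  pose proof (NR_pos J) as HNR.
  assert (HINR : NR J = 2 * INR (2 ^ (J - 1))) by (unfold NR; rewrite HN, mult_INR; auto).
  induction m; intros Hm1 HmJ rho Hrho Hne; [lia|].
  rewrite psihat_S. pose proof (Nat.div_mod_eq rho 2) as Hd. pose proof (Nat.mod_upper_bound rho 2 ltac:(lia)).
  rewrite Nat.pow_succ_r' in Hrho, Hne.
  destruct (Nat.eq_dec m 0) as [E0|E0].
  - subst m. simpl in Hrho, Hne. assert (rho = 0%nat) by lia. subst rho.
    replace (mu_of 0) with 0%nat by reflexivity. unfold gammaf. simpl Nat.eqb. cbv iota.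
    rewrite betaf_zero; auto. apply Cmul_C0_l.
    rewrite Hh. simpl Nat.pow. rewrite Nat.mul_1_l.
    replace (PI * INR (2 ^ (J - 1)) / NR J) with (PI / 2) by (rewrite HINR; field; lra).
    apply cos_PI2.
  - destruct (Nat.eq_dec (mu_of rho) 0) as [Em|Em].
    + rewrite IHm; try lia. apply Cmul_C0_r.
      * intro Heq. 
        assert (HQ : (2 ^ m = 2 * 2 ^ (m - 1))%nat).
        { replace m with (S (m - 1)) at 1 by lia. apply Nat.pow_succ_r'. }
        assert (HQ1 : (1 <= 2 ^ (m - 1))%nat) by (apply Nat.neq_0_lt_0, Nat.pow_nonzero; lia).
        assert (Hev : Nat.even (rho / 2) = false).
        { rewrite <- Nat.negb_odd. apply negb_false_iff. apply Nat.odd_spec.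
          exists (2 ^ (m - 1) - 1)%nat. lia. }
        unfold mu_of in Em. rewrite Hev in Em. lia.
    + unfold gammaf. destruct (Nat.eqb_spec (mu_of rho) 0) as [X|X]; [lia|].
      rewrite alphaf_zero; auto. apply Cmul_C0_l.
      apply sin_eq_0_1. exists (Z.of_nat (2 ^ (m - 1))).
      rewrite Hh, <- INR_IZR_INZ.
      assert (HQ : (2 ^ m = 2 * 2 ^ (m - 1))%nat).
      { replace m with (S (m - 1)) at 1 by lia. apply Nat.pow_succ_r'. }
      rewrite mult_INR, HQ, mult_INR, HINR. simpl (INR 2). field. lra.
Qed.

Definition cfac (J n : nat) : C :=
  let n' := (n mod Nn J)%nat in
  let h := (Nn J / 2)%nat in
  if (0 <? n')%nat && (n' <? h)%nat then Copp Ci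
  else if (h <? n')%nat then Ci
  else C1.

Lemma phihat_cfac J r m l n : phihat J r m l n = Cmul (cfac J n) (psihat J r m l n).
Proof.
  unfold phihat, cfac. destruct (_ && _); auto. destruct (_ <? _)%nat; auto.
  generalize (psihat J r m l n); intros; Csolve.
Qed.

Lemma cfac_unit J n : fst (cfac J n) ^ 2 + snd (cfac J n) ^ 2 = 1.
Proof.
  unfold cfac. destruct (_ && _); [|destruct (_ <? _)%nat]; simpl; ring.
Qed.

Lemma Cmod_cfac J n z : Cmod (Cmul (cfac J n) z) = Cmod z.
Proof.
  pose proof (cfac_unit J n). destruct (cfac J n) as [a b]. destruct z as [x y].
  change (a ^ 2 + b ^ 2 = 1) in H. unfold Cmod, Cmul; simpl. f_equal.
  transitivity ((a ^ 2 + b ^ 2) * (x ^ 2 + y ^ 2)); [ring | rewrite H; ring].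
Qed.

Lemma cfac_prod J n w1 w2 u1 u2 :
  Cmul (Cmul w1 (Cmul (cfac J n) u1)) (Cconj (Cmul w2 (Cmul (cfac J n) u2))) =
  Cmul (Cmul w1 u1) (Cconj (Cmul w2 u2)).
Proof.
  pose proof (cfac_unit J n). destruct (cfac J n) as [a b]. change (a ^ 2 + b ^ 2 = 1) in H.
  transitivity (Cscale (a ^ 2 + b ^ 2) (Cmul (Cmul w1 u1) (Cconj (Cmul w2 u2)))).
  - Csolve.
  - rewrite H. Csolve.
Qed.

Lemma phihat_hmult J r m l n : (1 <= J)%nat -> (1 <= r)%nat -> (1 <= m)%nat -> (m <= J)%nat ->
  (1 <= l)%nat -> (l <= 2 ^ m - 2)%nat -> (n < Nn J)%nat ->
  phihat J r m l n = Cmul (hmult J n) (psihat J r m l n).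
Proof.
  intros HJ Hr Hm1 HmJ Hl1 Hl2 Hn.
  assert (Hp : (1 <= 2 ^ m)%nat) by (apply Nat.neq_0_lt_0, Nat.pow_nonzero; lia).
  unfold phihat, hmult. rewrite Nat.mod_small by auto.
  destruct ((0 <? n)%nat && (n <? Nn J / 2)%nat) eqn:E1; auto.
  destruct (Nn J / 2 <? n)%nat eqn:E2; auto.
  rewrite Cmul_C0_l.
  apply andb_false_iff in E1. rewrite Nat.ltb_ge in E2.
  destruct E1 as [E1|E1]; rewrite Nat.ltb_ge in E1.
  - replace n with 0%nat by lia. apply psihat_zero0; lia.
  - replace n with (Nn J / 2)%nat by lia. apply psihat_zeroh; lia.
Qed.
Module LAmod.
From HB Require Import structures.
From mathcomp Require Import all_boot all_algebra.
From mathcomp Require Import Rstruct.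
Import GRing.Theory.
Local Open Scope ring_scope.

Lemma rsumE n (f : nat -> R) : rsum n f = \sum_(i < n) f i.
Proof.
elim: n => [|n IH]; first by rewrite big_ord0.
by rewrite big_ord_recr /= IH.
Qed.

Lemma ortho_complete (n : nat) (E : nat -> nat -> R) :
  (forall i j, (i < n)%coq_nat -> (j < n)%coq_nat ->
     rsum n (fun k => (E i k * E j k)%R) = if Nat.eqb i j then 1%R else 0%R) ->
  forall j k, (j < n)%coq_nat -> (k < n)%coq_nat ->
     rsum n (fun i => (E i j * E i k)%R) = if Nat.eqb j k then 1%R else 0%R.
Proof.
move=> H j k hj hk.
pose A := \matrix_(i < n, k < n) E i k.
have AA : A *m A^T = 1%:M.
  apply/matrixP => i i'.
  rewrite !mxE.
  rewrite (eq_bigr (fun k : 'I_n => E i k * E i' k)); last by move=> l _; rewrite !mxE.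
  have := H i i' (ltP (ltn_ord i)) (ltP (ltn_ord i')).
  rewrite rsumE => ->.
  have [->|ne] := eqVneq i i'.
    by rewrite Nat.eqb_refl.
  case: Nat.eqb_spec => // h; exfalso; move/eqP: ne; apply; exact: val_inj.
have := mulmx1C AA => /matrixP /(_ (Ordinal (introT ltP hj)) (Ordinal (introT ltP hk))).
rewrite !mxE => key.
rewrite rsumE.
rewrite (eq_bigr (fun i : 'I_n => A^T (Ordinal (introT ltP hj)) i * A i (Ordinal (introT ltP hk)))); last by move=> i _; rewrite !mxE.
rewrite key.
case: Nat.eqb_spec => [e|ne].
  by case: eqP => // h; exfalso; apply: h; apply: val_inj.
case: eqP => // h; exfalso; apply: ne; by move: h => [].
Qed.
End LAmod.

Theorem proposition3p3 (J r m : nat) (psi phi : nat -> Z -> R) :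
  (1 <= J)%nat -> (1 <= r)%nat -> (1 <= m)%nat -> (m <= J)%nat ->
  (* psi l = psi_[m],l : the element of Pi[N] with DFT psihat m l *)
  (forall l, (l < 2 ^ m)%nat ->
     periodic J (psi l) /\ forall n, DFT J (psi l) n = psihat J r m l n) ->
  (* phi l = phi_[m],l : the element of Pi[N] with DFT phihat m l *)
  (forall l, (l < 2 ^ m)%nat ->
     periodic J (phi l) /\ forall n, DFT J (phi l) n = phihat J r m l n) ->
  (* known fact (assumable): the shifts of psi_[m],l form an orthonormal system *)
  (forall l lam p s, (l < 2 ^ m)%nat -> (lam < 2 ^ m)%nat ->
     (p < 2 ^ (J - m))%nat -> (s < 2 ^ (J - m))%nat ->
     inner J (tshift (psi l) (Z.of_nat (2 ^ m * p))) (tshift (psi lam) (Z.of_nat (2 ^ m * s)))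
     = if ((l =? lam) && (p =? s))%nat then 1 else 0) ->
  (* (i) *)
  (forall l n, (l < 2 ^ m)%nat -> Cmod (DFT J (phi l) n) = Cmod (DFT J (psi l) n))
  (* (ii) *)
  /\ (forall l, (1 <= l)%nat -> (l <= 2 ^ m - 2)%nat ->
        forall k, phi l k = Hilbert J (psi l) k)
  (* (iii) orthonormality *)
  /\ (forall l lam p s, (l < 2 ^ m)%nat -> (lam < 2 ^ m)%nat ->
        (p < 2 ^ (J - m))%nat -> (s < 2 ^ (J - m))%nat ->
        inner J (tshift (phi l) (Z.of_nat (2 ^ m * p))) (tshift (phi lam) (Z.of_nat (2 ^ m * s)))
        = if ((l =? lam) && (p =? s))%nat then 1 else 0)
  (* ... and it is a basis of Pi[N]: every x in Pi[N] expands in it *)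
  /\ (forall x : Z -> R, periodic J x -> forall k : Z,
        x k = rsum (2 ^ m) (fun l => rsum (2 ^ (J - m)) (fun p =>
                inner J x (tshift (phi l) (Z.of_nat (2 ^ m * p)))
                * tshift (phi l) (Z.of_nat (2 ^ m * p)) k))).
Proof.
  intros HJ Hr Hm1 HmJ Hpsi Hphi Horth.
  pose proof (NR_pos J) as HNR.
  pose proof (Nn_pos J) as HN.
  assert (HM : (1 <= 2 ^ m)%nat) by (apply Nat.neq_0_lt_0, Nat.pow_nonzero; lia).
  assert (HB : (1 <= 2 ^ (J - m))%nat) by (apply Nat.neq_0_lt_0, Nat.pow_nonzero; lia).
  assert (HNMB : Nn J = (2 ^ m * 2 ^ (J - m))%nat).
  { unfold Nn. rewrite <- Nat.pow_add_r. f_equal. lia. }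
  assert (Hiii : forall l lam p s, (l < 2 ^ m)%nat -> (lam < 2 ^ m)%nat ->
        (p < 2 ^ (J - m))%nat -> (s < 2 ^ (J - m))%nat ->
        inner J (tshift (phi l) (Z.of_nat (2 ^ m * p))) (tshift (phi lam) (Z.of_nat (2 ^ m * s)))
        = if ((l =? lam) && (p =? s))%nat then 1 else 0).
  { intros l lam p s Hl Hlam Hp Hs.
    rewrite <- (Horth l lam p s Hl Hlam Hp Hs).
    destruct (Hphi l Hl) as [Pl Dl]. destruct (Hphi lam Hlam) as [Plam Dlam].
    destruct (Hpsi l Hl) as [Ql El]. destruct (Hpsi lam Hlam) as [Qlam Elam].
    apply (Rmult_eq_reg_l (NR J)); [| lra].
    rewrite (parseval J (tshift (phi l) _) (tshift (phi lam) _)) by (apply tshift_periodic; auto).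
    rewrite (parseval J (tshift (psi l) _) (tshift (psi lam) _)) by (apply tshift_periodic; auto).
    f_equal. apply csum_ext; intros n Hn.
    rewrite !shift_DFT by auto.
    rewrite Dl, Dlam, El, Elam, !phihat_cfac. apply cfac_prod. }
  split; [| split; [| split]].
  - intros l n Hl. destruct (Hphi l Hl) as [_ Dl]. destruct (Hpsi l Hl) as [_ El].
    rewrite Dl, El, phihat_cfac, Cmod_cfac; auto.
  - intros l Hl1 Hl2 k.
    assert (Hl : (l < 2 ^ m)%nat) by lia.
    destruct (Hphi l Hl) as [Pl Dl]. destruct (Hpsi l Hl) as [_ El].
    pose proof (inversion J (phi l) Pl k) as Inv.
    unfold Hilbert.
    rewrite (csum_ext _ _ (fun n => Cmul (DFT J (phi l) n) (omega_pow J (IZR k * INR n)))).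
    + rewrite Inv. unfold Cre, RtoC; simpl. field. lra.
    + intros n Hn. rewrite Dl, El, phihat_hmult; auto.
  - exact Hiii.
  - intros x Hx k.
    set (B := (2 ^ (J - m))%nat) in *.
    set (e := fun i => tshift (phi (i / B)%nat) (Z.of_nat (2 ^ m * (i mod B)))).
    assert (Hdiv : forall l p, (p < B)%nat -> ((l * B + p) / B = l)%nat /\ ((l * B + p) mod B = p)%nat).
    { intros l p Hp. assert (Q : ((l * B + p) / B = l)%nat).
      { rewrite Nat.div_add_l by lia. rewrite Nat.div_small by lia. lia. }
      split; auto. pose proof (Nat.div_mod_eq (l * B + p) B). rewrite Q in H. lia. }
    assert (Hei : forall i, (i < Nn J)%nat -> periodic J (e i)).
    { intros i Hi. unfold e. apply tshift_periodic. apply Hphi.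
      apply Nat.Private_NDivProp.div_lt_upper_bound; lia. }
    transitivity (rsum (2 ^ m * B) (fun i => inner J x (e i) * e i k)).
    2:{ rewrite rsum_split. apply rsum_ext; intros l Hl. apply rsum_ext; intros p Hp.
        unfold e. destruct (Hdiv l p Hp) as [-> ->]. auto. }
    rewrite <- HNMB.
    pose proof (Z.mod_pos_bound k (Z.of_nat (Nn J)) ltac:(lia)) as Hb.
    set (k0 := Z.to_nat (k mod Z.of_nat (Nn J))).
    assert (Hk0 : (k0 < Nn J)%nat) by (unfold k0; lia).
    assert (Ek : k = ((Z.of_nat k0) + ((k / Z.of_nat (Nn J))) * Z.of_nat (Nn J))%Z).
    { unfold k0. rewrite Z2Nat.id by lia. pose proof (Z.div_mod k (Z.of_nat (Nn J))). lia. }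
    rewrite (rsum_ext _ _ (fun i => rsum (Nn J) (fun j => x (Z.of_nat j) * (e i (Z.of_nat j) * e i (Z.of_nat k0))))).
    2:{ intros i Hi. rewrite Ek, per_Z by auto. unfold inner. rewrite rsum_mult_r.
        apply rsum_ext; intros; ring. }
    rewrite rsum_exchange.
    rewrite (rsum_ext _ _ (fun j => x (Z.of_nat j) * (if Nat.eqb j k0 then 1 else 0))).
    2:{ intros j Hj. rewrite <- rsum_mult_l. f_equal.
        apply (LAmod.ortho_complete (Nn J) (fun i j => e i (Z.of_nat j))); auto.
        intros i i' Hi Hi'.
        change (inner J (e i) (e i') = if (i =? i')%nat then 1 else 0).
        unfold e. rewrite Hiii.
        - pose proof (Nat.div_mod_eq i B). pose proof (Nat.div_mod_eq i' B).
          destruct (Nat.eqb_spec i i') as [E|E].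
          + subst. rewrite !Nat.eqb_refl; auto.
          + destruct (Nat.eqb_spec (i / B) (i' / B)); destruct (Nat.eqb_spec (i mod B) (i' mod B)); simpl; auto.
            exfalso. apply E. lia.
        - apply Nat.Private_NDivProp.div_lt_upper_bound; lia.
        - apply Nat.Private_NDivProp.div_lt_upper_bound; lia.
        - apply Nat.mod_upper_bound; lia.
        - apply Nat.mod_upper_bound; lia. }
    rewrite (rsum_single _ _ k0 Hk0).
    + rewrite Nat.eqb_refl, Rmult_1_r. rewrite Ek at 1. apply per_Z; auto.
    + intros j Hj Hne. rewrite (proj2 (Nat.eqb_neq j k0) Hne). ring.
Qed.
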